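(* For every 3-periodic $P_1P_2P_3$ of the elliptic billiard, $$\sum_{i=1}^3\frac{1}{|P_i-f_1|}=\frac{a^2+b^2+\delta}{ab^2}=\frac{J\sqrt2\sqrt{JL+\sqrt{9-2JL}-3}}{JL-4},\qquad \delta=\sqrt{a^4-a^2b^2+b^4}.$$
   Context: The elliptic billiard is $\mathcal{E}: x^2/a^2+y^2/b^2=1$, $a>b>0$, $c=\sqrt{a^2-b^2}$, with focus $f_1=(-c,0)$. A 3-periodic is a triangle $P_1P_2P_3$ inscribed in $\mathcal{E}$ that is a closed billiard trajectory (at each vertex the normal to $\mathcal{E}$ bisects the angle between the two incident sides). $L$ is the perimeter (the same for all 3-periodics), $J$ is Joachimsthal's constant $J=\frac12\nabla f(P_i)\cdot\hat v>0$ ($f=x^2/a^2+y^2/b^2$, $\hat v$ unit direction of the trajectory at $P_i$); explicitly $J=\sqrt{2\delta-a^2-b^2}/c^2$ and $L=2(\delta+a^2+b^2)J$. *)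

(* Defs.v *)
From Stdlib Require Import Reals Lra.
Open Scope R_scope.

Definition pt := (R * R)%type.

Definition pdist (P Q : pt) : R :=
  sqrt ((fst P - fst Q) ^ 2 + (snd P - snd Q) ^ 2).

Definition on_ellipse (a b : R) (P : pt) : Prop :=
  (fst P) ^ 2 / a ^ 2 + (snd P) ^ 2 / b ^ 2 = 1.

(* half gradient of f = x^2/a^2 + y^2/b^2 at P : a normal vector to the ellipse *)
Definition normal (a b : R) (P : pt) : pt := (fst P / a ^ 2, snd P / b ^ 2).

Definition unit_dir (P Q : pt) : pt :=
  ((fst Q - fst P) / pdist P Q, (snd Q - snd P) / pdist P Q).

Definition cross (u v : pt) : R := fst u * snd v - snd u * fst v.

(* Billiard reflection law at vertex P with neighbours Q, S: the normal
   line to the ellipse at P bisects the angle QPS, i.e. the unit vectors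
   towards Q and towards S are mirror images w.r.t. the normal line,
   equivalently their sum is parallel to the normal. *)
Definition reflects (a b : R) (Q P S : pt) : Prop :=
  cross (normal a b P)
        (fst (unit_dir P Q) + fst (unit_dir P S),
         snd (unit_dir P Q) + snd (unit_dir P S)) = 0.

Definition three_periodic (a b : R) (P1 P2 P3 : pt) : Prop :=
  P1 <> P2 /\ P2 <> P3 /\ P3 <> P1 /\
  on_ellipse a b P1 /\ on_ellipse a b P2 /\ on_ellipse a b P3 /\
  reflects a b P3 P1 P2 /\ reflects a b P1 P2 P3 /\ reflects a b P2 P3 P1.

Definition cc (a b : R) : R := sqrt (a ^ 2 - b ^ 2).
Definition focus1 (a b : R) : pt := (- cc a b, 0).
Definition delta (a b : R) : R := sqrt (a ^ 4 - a ^ 2 * b ^ 2 + b ^ 4).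
(* Joachimsthal's constant and perimeter of 3-periodics (explicit formulas) *)
Definition Jc (a b : R) : R :=
  sqrt (2 * delta a b - a ^ 2 - b ^ 2) / (cc a b) ^ 2.
Definition Lp (a b : R) : R := 2 * (delta a b + a ^ 2 + b ^ 2) * Jc a b.

(* Main.v *)
Require Import Defs.
From Stdlib Require Import Reals Lra Psatz.
Open Scope R_scope.

Lemma vieta (al be ga Xi Yi Xj Yj Xk Yk : R) :
  be <> 0 -> Xi^2+Yi^2 = 1 -> Xj^2+Yj^2=1 -> Xk^2+Yk^2=1 ->
  (Xj <> Xk \/ Yj <> Yk) ->
  al*Xi*Xj - be*Yi*Yj = ga -> al*Xi*Xk - be*Yi*Yk = ga ->
  (al^2*Xi^2 + be^2*Yi^2)*(Xj+Xk) = 2*al*ga*Xi /\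
  (al^2*Xi^2 + be^2*Yi^2)*(Xj*Xk) = ga^2 - be^2*Yi^2.
Proof.
  intros hb hi hj hk hd ej ek.
  set (D := al^2*Xi^2 + be^2*Yi^2).
  assert (qj : D*Xj^2 - 2*al*ga*Xi*Xj + ga^2 - be^2*Yi^2 = 0).
  { assert (be*Yi*Yj = al*Xi*Xj - ga) by lra.
    assert (Yj^2 = 1 - Xj^2) by lra.
    assert ((be*Yi*Yj)^2 = (al*Xi*Xj - ga)^2) by (rewrite H; reflexivity).
    unfold D. replace ((be*Yi*Yj)^2) with (be^2*Yi^2*Yj^2) in H1 by ring.
    rewrite H0 in H1. nra. }
  assert (qk : D*Xk^2 - 2*al*ga*Xi*Xk + ga^2 - be^2*Yi^2 = 0).
  { assert (be*Yi*Yk = al*Xi*Xk - ga) by lra.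
    assert (Yk^2 = 1 - Xk^2) by lra.
    assert ((be*Yi*Yk)^2 = (al*Xi*Xk - ga)^2) by (rewrite H; reflexivity).
    unfold D. replace ((be*Yi*Yk)^2) with (be^2*Yi^2*Yk^2) in H1 by ring.
    rewrite H0 in H1. nra. }
  destruct (Req_dec Xj Xk) as [exk|nxk].
  - subst Xk. destruct hd as [hd|hd]; [congruence|].
    assert (Yk = - Yj).
    { assert ((Yk - Yj)*(Yk+Yj) = 0) by nra.
      apply Rmult_integral in H. destruct H; [exfalso; apply hd; lra| lra]. }
    subst Yk.
    assert (Yj <> 0) by (intro; apply hd; lra).
    assert (be*Yi*Yj = 0) by lra.
    assert (Yi = 0).
    { apply Rmult_integral in H0. destruct H0 as [H0|H0]; [|congruence].
      apply Rmult_integral in H0. destruct H0; [congruence|auto]. }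
    subst Yi. unfold D.
    assert (Xi^2 = 1) by lra.
    split.
    + rewrite <- ej. replace (Xi*Xi) with (Xi^2) by ring. nra.
    + rewrite <- ej. nra.
  - assert (sum : D*(Xj+Xk) = 2*al*ga*Xi).
    { assert ((Xj - Xk)*(D*(Xj+Xk) - 2*al*ga*Xi) = 0) by nra.
      apply Rmult_integral in H. destruct H; [exfalso; apply nxk; lra| lra]. }
    split; [exact sum|]. nra.
Qed.

Lemma sq_pos (x : R) : x <> 0 -> 0 < x^2.
Proof. intro h. replace (x^2) with (Rsqr x) by (unfold Rsqr; ring). apply Rsqr_pos_lt; auto. Qed.

Lemma sA_le (A B s X Y X' Y' : R) : B > 0 -> A > B -> s > 0 ->
  X^2+Y^2=1 -> X'^2+Y'^2=1 ->
  (s*(A-B)-1)*X*X' - (s*(A-B)+1)*Y*Y' = s*(A+B)-1 ->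
  s*A > 1 -> Y*Y' < 0.
Proof.
  intros hB hA hs h1 h2 e hsA.
  destruct (Rlt_or_le (Y*Y') 0) as [l|l]; [exact l|exfalso].
  set (p := X*X' + Y*Y').
  assert (pl : p <= 1) by (unfold p; pose proof (pow2_ge_0 (X-X')); pose proof (pow2_ge_0 (Y-Y')); nra).
  assert (pg : -1 <= p) by (unfold p; pose proof (pow2_ge_0 (X+X')); pose proof (pow2_ge_0 (Y+Y')); nra).
  set (u := s*(A-B)). assert (u > 0) by (unfold u; apply Rmult_lt_0_compat; lra).
  assert (e2 : (u-1)*p - 2*u*(Y*Y') = s*(A+B)-1) by (unfold p, u in *; lra).
  assert (e3 : (u-1)*p >= s*(A+B)-1) by nra.
  destruct (Rle_or_lt 1 u).
  - assert ((u-1)*p <= u - 1) by nra. unfold u in *. nra.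
  - assert ((u-1)*p <= 1 - u) by nra. unfold u in *. nra.
Qed.


Lemma core (A B s X1 Y1 X2 Y2 X3 Y3 : R) : B > 0 -> A > B -> s > 0 ->
  X1^2+Y1^2=1 -> X2^2+Y2^2=1 -> X3^2+Y3^2=1 ->
  (X1 <> X2 \/ Y1 <> Y2) -> (X2 <> X3 \/ Y2 <> Y3) -> (X3 <> X1 \/ Y3 <> Y1) ->
  (s*(A-B)-1)*X1*X2 - (s*(A-B)+1)*Y1*Y2 = s*(A+B)-1 ->
  (s*(A-B)-1)*X2*X3 - (s*(A-B)+1)*Y2*Y3 = s*(A+B)-1 ->
  (s*(A-B)-1)*X3*X1 - (s*(A-B)+1)*Y3*Y1 = s*(A+B)-1 ->
  s^2*(A-B)^2 + 2*s*(A+B) - 3 = 0 /\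
  (s*(A-B)+1)^2*(X1*X2+X1*X3+X2*X3+1) = (s*(A+B)-1)^2 /\
  (s*(A-B)+1)^2*(X1+X2+X3) + 4*(s*(A-B))*(X1*X2*X3) = 0.
Proof.
  intros hB hA hs u1 u2 u3 d12 d23 d31 e12 e23 e31.
  assert (hsA : s*A <= 1).
  { destruct (Rle_or_lt (s*A) 1) as [l|l]; [exact l|exfalso].
    pose proof (sA_le A B s X1 Y1 X2 Y2 hB hA hs u1 u2 e12 l) as n1.
    pose proof (sA_le A B s X2 Y2 X3 Y3 hB hA hs u2 u3 e23 l) as n2.
    pose proof (sA_le A B s X3 Y3 X1 Y1 hB hA hs u3 u1 e31 l) as n3.
    assert (h12 : 0 < (Y1*Y2)*(Y2*Y3)) by (apply Rmult_lt_0_compat_neg; lra) || nra.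
    assert (h3 : (Y1*Y2)*(Y2*Y3)*(Y3*Y1) < 0).
    { assert (0 < - (Y3*Y1)) by lra.
      assert (0 < (Y1*Y2)*(Y2*Y3) * - (Y3*Y1)) by (apply Rmult_lt_0_compat; lra).
      lra. }
    assert ((Y1*Y2)*(Y2*Y3)*(Y3*Y1) = (Y1*Y2*Y3)^2) by ring.
    pose proof (pow2_ge_0 (Y1*Y2*Y3)). lra. }
  set (u := s*(A-B)) in *. set (al := u - 1) in *. set (be := u + 1) in *.
  set (ga := s*(A+B) - 1) in *.
  assert (hu : u > 0) by (unfold u; apply Rmult_lt_0_compat; lra).
  assert (hbe : be <> 0) by (unfold be; lra).
  assert (e21 : al*X2*X1 - be*Y2*Y1 = ga) by (rewrite <- e12; ring).
  assert (e32 : al*X3*X2 - be*Y3*Y2 = ga) by (rewrite <- e23; ring).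
  assert (e13 : al*X1*X3 - be*Y1*Y3 = ga) by (rewrite <- e31; ring).
  destruct (vieta al be ga X1 Y1 X2 Y2 X3 Y3 hbe u1 u2 u3 d23 e12 e13) as [s1 p1].
  assert (d13 : X1 <> X3 \/ Y1 <> Y3) by (destruct d31; [left|right]; congruence).
  destruct (vieta al be ga X2 Y2 X1 Y1 X3 Y3 hbe u2 u1 u3 d13 e21 e23) as [s2 p2].
  destruct (vieta al be ga X3 Y3 X1 Y1 X2 Y2 hbe u3 u1 u2 d12 e31 e32) as [s3 p3].
  set (S1 := X1+X2+X3). set (S2 := X1*X2+X1*X3+X2*X3). set (S3 := X1*X2*X3).
  assert (Dd : forall X Y, X^2+Y^2 = 1 -> al^2*X^2+be^2*Y^2 = be^2 - 4*u*X^2).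
  { intros X Y h. replace (Y^2) with (1 - X^2) by lra. unfold al, be. ring. }
  rewrite (Dd _ _ u1) in s1, p1. rewrite (Dd _ _ u2) in s2, p2. rewrite (Dd _ _ u3) in s3, p3.
  set (c2 := 2*al*ga + be^2 + 4*u*S2).
  assert (hh1 : (be^2 - 4*u*X1^2)*(S1 - X1) - 2*al*ga*X1 = 0).
  { replace (S1 - X1) with (X2+X3) by (unfold S1; ring). lra. }
  assert (hh2 : (be^2 - 4*u*X2^2)*(S1 - X2) - 2*al*ga*X2 = 0).
  { replace (S1 - X2) with (X1+X3) by (unfold S1; ring). lra. }
  assert (hh3 : (be^2 - 4*u*X3^2)*(S1 - X3) - 2*al*ga*X3 = 0).
  { replace (S1 - X3) with (X1+X2) by (unfold S1; ring). lra. }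
  assert (dif : forall Xa Xb, (be^2 - 4*u*Xa^2)*(S1 - Xa) - 2*al*ga*Xa = 0 ->
      (be^2 - 4*u*Xb^2)*(S1 - Xb) - 2*al*ga*Xb = 0 -> Xa <> Xb ->
      Xa*Xb + (Xa+Xb)*(S1 - Xa - Xb) = S2 -> c2 = 0).
  { intros Xa Xb ha hb nab hs2.
    assert (I : (Xa - Xb)*c2 = ((be^2 - 4*u*Xb^2)*(S1 - Xb) - 2*al*ga*Xb)
               - ((be^2 - 4*u*Xa^2)*(S1 - Xa) - 2*al*ga*Xa)).
    { unfold c2. rewrite <- hs2. ring. }
    rewrite ha, hb in I.
    assert ((Xa - Xb)*c2 = 0) by lra.
    apply Rmult_integral in H. destruct H; [exfalso; apply nab; lra|lra]. }
  assert (hc2 : c2 = 0).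
  { destruct (Req_dec X1 X2) as [x12|x12].
    - destruct (Req_dec X1 X3) as [x13|x13].
      + exfalso. subst X2 X3.
        assert (Y2 = - Y1).
        { destruct d12 as [h|h]; [congruence|].
          assert ((Y2 - Y1)*(Y2+Y1) = 0) by (replace ((Y2 - Y1)*(Y2+Y1)) with ((X1^2+Y2^2) - (X1^2+Y1^2)) by ring; lra).
          apply Rmult_integral in H. destruct H; [exfalso; apply h; lra| lra]. }
        assert (Y3 = - Y1).
        { destruct d31 as [h|h]; [congruence|].
          assert ((Y3 - Y1)*(Y3+Y1) = 0) by (replace ((Y3 - Y1)*(Y3+Y1)) with ((X1^2+Y3^2) - (X1^2+Y1^2)) by ring; lra).
          apply Rmult_integral in H0. destruct H0; [exfalso; apply h; lra| lra]. }
        destruct d23 as [h|h]; [congruence|]. apply h; lra.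
      + apply (dif X1 X3 hh1 hh3 x13). unfold S1, S2. ring.
    - apply (dif X1 X2 hh1 hh2 x12). unfold S1, S2. ring. }
  assert (ce : c2*X1^2 = be^2*(S2+1) - ga^2).
  { assert (H : (be^2 - 4*u*X1^2)*S2 = 2*al*ga*X1^2 + ga^2 - be^2*Y1^2).
    { replace ((be^2 - 4*u*X1^2)*S2) with
        (X1*((be^2 - 4*u*X1^2)*(X2+X3)) + (be^2 - 4*u*X1^2)*(X2*X3)) by (unfold S2; ring).
      rewrite s1, p1. ring. }
    replace (Y1^2) with (1 - X1^2) in H by lra.
    unfold c2. lra. }
  rewrite hc2 in ce.
  assert (e2 : be^2*(S2+1) = ga^2) by lra.
  assert (K : (be*(al+ga))^2 - (al*ga)^2 = 0).
  { assert (H : be^2*c2 - 4*u*(be^2*(S2+1) - ga^2) = 0) by (rewrite hc2, e2; ring).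
    rewrite <- H. unfold c2, al, be. ring. }
  assert (f1 : s^2*(A-B)^2 + 2*s*(A+B) - 3 = 0).
  { assert (f2n : be*(al+ga) + al*ga < 0).
    { set (t := s*A) in *.
      assert (ht : 0 < t) by (unfold t; apply Rmult_lt_0_compat; lra).
      assert (I : A^2*(be*(al+ga) + al*ga) = -(1-t)*A^2 - t*B^2 + t*(t-1)*((3*A+B)*(A-B))).
      { unfold be, al, ga, u, t. field. }
      assert (0 < A^2) by (apply sq_pos; lra).
      assert (0 <= (1-t)*A^2) by (apply Rmult_le_pos; lra).
      assert (0 < t*B^2) by (apply Rmult_lt_0_compat; [lra| apply sq_pos; lra]).
      assert (t*(t-1)*((3*A+B)*(A-B)) <= 0).
      { assert (0 <= t*(1-t)) by (apply Rmult_le_pos; lra).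
        assert (0 < (3*A+B)*(A-B)) by (apply Rmult_lt_0_compat; lra).
        assert (0 <= t*(1-t)*((3*A+B)*(A-B))) by (apply Rmult_le_pos; lra).
        replace (t*(t-1)*((3*A+B)*(A-B))) with (-(t*(1-t)*((3*A+B)*(A-B)))) by ring. lra. }
      assert (A^2*(be*(al+ga) + al*ga) < 0) by lra.
      destruct (Rle_or_lt 0 (be*(al+ga) + al*ga)); [|assumption].
      assert (0 <= A^2*(be*(al+ga) + al*ga)) by (apply Rmult_le_pos; lra). lra. }
    assert (H : (be*(al+ga) - al*ga)*(be*(al+ga) + al*ga) = 0) by (rewrite <- K; ring).
    apply Rmult_integral in H. destruct H as [H|H]; [|lra].
    rewrite <- H. unfold be, al, ga, u. ring. }
  split; [exact f1|]. split; [exact e2|].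
  assert (hal : al <> 0).
  { intro h0. unfold al, u in h0. assert (h1 : s*(A-B) = 1) by lra.
    assert (s^2*(A-B)^2 = 1) by (replace (s^2*(A-B)^2) with ((s*(A-B))^2) by ring; rewrite h1; ring).
    assert (h2 : s*(A+B) = 1) by lra.
    assert (0 < s*B) by (apply Rmult_lt_0_compat; lra).
    assert (s*(A+B) - s*(A-B) = 2*(s*B)) by ring. lra. }
  assert (D1 : be^2 - 4*u*X1^2 > 0).
  { rewrite <- (Dd _ _ u1). destruct (Req_dec Y1 0) as [y|y].
    - subst Y1. assert (H0 : X1^2 = 1) by lra. rewrite H0.
      assert (al^2 > 0) by (apply sq_pos; auto). lra.
    - assert (Y1^2 > 0) by (apply sq_pos; auto).
      assert (be^2 > 0) by (apply sq_pos; auto).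
      assert (0 <= al^2*X1^2) by (apply Rmult_le_pos; apply pow2_ge_0).
      assert (0 < be^2*Y1^2) by (apply Rmult_lt_0_compat; lra). lra. }
  assert (H : (be^2 - 4*u*X1^2)*(be^2*S1 + 4*u*S3) = 0).
  { replace (Y1^2) with (1 - X1^2) in p1 by lra.
    replace ((be^2 - 4*u*X1^2)*(be^2*S1 + 4*u*S3)) with
      ((be^2 - 4*u*X1^2)*be^2*X1 + be^2*((be^2 - 4*u*X1^2)*(X2+X3))
        + 4*u*X1*((be^2 - 4*u*X1^2)*(X2*X3))) by (unfold S1, S3; ring).
    rewrite s1, p1.
    replace ((be^2 - 4*u*X1^2)*be^2*X1 + be^2*(2*al*ga*X1) + 4*u*X1*(ga^2 - be^2*(1 - X1^2)))
      with (X1*((be*(al+ga))^2 - (al*ga)^2)) by (unfold al, be; ring).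
    rewrite K. ring. }
  apply Rmult_integral in H. destruct H; [lra|exact H].
Qed.

Lemma I1 (A B d : R) : d^2 = A^2 - A*B + B^2 ->
  (A+B+d)*(4*A*(2*d-A-B) - ((2*d-A-B)+(A-B))^2) = 8*A*B*(2*d-A-B).
Proof.
  intro hd. apply Rminus_diag_uniq.
  replace ((A+B+d)*(4*A*(2*d-A-B) - ((2*d-A-B)+(A-B))^2) - 8*A*B*(2*d-A-B))
    with ((d^2 - (A^2 - A*B + B^2))*(-4*d + 4*B + 4*A)) by ring.
  rewrite hd; ring.
Qed.

Lemma I2 (A B d : R) : d^2 = A^2 - A*B + B^2 ->
  (A+d)*(((2*d-A-B)*(A+B) - (A-B)^2)^2 - (A-B)^2*((2*d-A-B)+(A-B))^2)
  = A*(2*B-A-d)*(A-B)*((2*d-A-B)+(A-B))^2.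
Proof.
  intro hd. apply Rminus_diag_uniq.
  replace ((A+d)*(((2*d-A-B)*(A+B) - (A-B)^2)^2 - (A-B)^2*((2*d-A-B)+(A-B))^2)
    - A*(2*B-A-d)*(A-B)*((2*d-A-B)+(A-B))^2)
    with ((d^2 - (A^2 - A*B + B^2))*(12*A*B*d - 8*A*B^2 + 4*A^2*d - 4*A^2*B - 4*A^3)) by ring.
  rewrite hd; ring.
Qed.

Lemma key (a c A B c2 d s S1 S2 S3 : R) :
  a > 0 -> B > 0 -> A = a^2 -> c2 = c^2 -> c2 = A - B -> A > B ->
  d^2 = A^2 - A*B + B^2 -> s > 0 -> s*c2^2 = 2*d - A - B ->
  (s*c2+1)^2*(S2+1) = (s*(A+B)-1)^2 ->
  (s*c2+1)^2*S1 + 4*(s*c2)*S3 = 0 ->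
  (A+B+d)*(a^3 + a^2*c*S1 + a*c^2*S2 + c^3*S3) = a*B*(3*a^2 + 2*a*c*S1 + c^2*S2).
Proof.
  intros ha hB hA hc hc2 hAB hd hs hw e2 e3.
  assert (c2p : c2 > 0) by lra.
  set (w := 2*d - A - B) in *.
  set (u := s*c2) in *. set (be := u + 1) in *. set (ga := s*(A+B) - 1) in *.
  assert (hu : u > 0) by (unfold u; apply Rmult_lt_0_compat; lra).
  assert (hbe : be > 0) by (unfold be; lra).
  assert (hbc : be*c2 = w + c2) by (unfold be, u; rewrite <- hw; ring).
  assert (hgc : ga*c2^2 = w*(A+B) - c2^2).
  { replace (ga*c2^2) with ((A+B)*(s*c2^2) - c2^2) by (unfold ga; ring). rewrite hw; ring. }
  assert (hS2 : be^2*S2 = ga^2 - be^2) by (rewrite <- e2; ring).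
  assert (Xp : (A+B+d)*(A + c2*S2) - B*(3*A + c2*S2) = 0).
  { assert (H : c2^4*be^2*((A+B+d)*(A + c2*S2) - B*(3*A + c2*S2)) =
       c2*((A+d)*((ga*c2^2)^2 - c2^2*(be*c2)^2) - A*(2*B-A-d)*c2*(be*c2)^2)).
    { replace (c2^4*be^2*((A+B+d)*(A + c2*S2) - B*(3*A + c2*S2))) with
        ((A+d)*c2*c2^4*(be^2*S2) + A*(A+d-2*B)*c2^4*be^2) by ring.
      rewrite hS2. ring. }
    rewrite hgc, hbc in H.
    pose proof (I2 A B d hd) as i2. fold w in i2. rewrite <- hc2 in i2.
    rewrite i2 in H. replace (c2 * (A * (2 * B - A - d) * c2 * (w + c2) ^ 2 -
        A * (2 * B - A - d) * c2 * (w + c2) ^ 2)) with 0 in H by ring.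
    assert (c2^4*be^2 <> 0).
    { apply Rmult_integral_contrapositive_currified; apply pow_nonzero; lra. }
    apply Rmult_integral in H. destruct H; [contradiction|assumption]. }
  assert (Yp : (A+B+d)*(4*A*u - c2*be^2) - 8*A*B*u = 0).
  { assert (H : c2*((A+B+d)*(4*A*u - c2*be^2) - 8*A*B*u) =
      (A+B+d)*(4*A*(u*c2) - (be*c2)^2) - 8*A*B*(u*c2)) by ring.
    replace (u*c2) with w in H by (unfold u; rewrite <- hw; ring).
    rewrite hbc in H.
    pose proof (I1 A B d hd) as i1. fold w in i1. rewrite <- hc2 in i1.
    rewrite i1 in H. replace (8 * A * B * w - 8 * A * B * w) with 0 in H by ring.
    apply Rmult_integral in H. destruct H; [lra|assumption]. }
  assert (hS3 : S3 = -(be^2*S1)/(4*u)).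
  { replace S3 with ((4*u*S3)/(4*u)) by (field; lra).
    replace (4*u*S3) with (-(be^2*S1)) by lra. reflexivity. }
  rewrite hS3. apply Rminus_diag_uniq.
  replace c2 with (c^2) in Xp, Yp. subst A.
  transitivity (a*((a^2+B+d)*(a^2 + c^2*S2) - B*(3*a^2 + c^2*S2))
     + c*S1*((a^2+B+d)*(4*a^2*u - c^2*be^2) - 8*a^2*B*u)/(4*u)).
  - field. lra.
  - rewrite Xp, Yp. field. lra.
Qed.

Lemma basics (a b : R) : a > b -> b > 0 ->
  (cc a b)^2 = a^2 - b^2 /\ (delta a b)^2 = (a^2)^2 - a^2*b^2 + (b^2)^2 /\ delta a b > 0
  /\ 2*delta a b - a^2 - b^2 > 0 /\ cc a b > 0.
Proof.
  intros hab hb.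
  assert (AB : a^2 > b^2) by nra.
  assert (hc2 : (cc a b)^2 = a^2 - b^2) by (unfold cc; apply pow2_sqrt; nra).
  assert (hq : 0 < a^4 - a^2*b^2 + b^4) by nra.
  assert (hd2 : (delta a b)^2 = (a^2)^2 - a^2*b^2 + (b^2)^2) by (unfold delta; rewrite pow2_sqrt; [ring|lra]).
  assert (hd : delta a b > 0) by (unfold delta; apply sqrt_lt_R0; lra).
  split; [exact hc2|]. split; [exact hd2|]. split; [exact hd|]. split.
  - remember (delta a b) as d. remember (a^2) as A. remember (b^2) as B.
    assert (E : (2*d - (A+B))*(2*d + (A+B)) = 3*(A-B)^2) by nra.
    assert (0 < 3*(A-B)^2) by nra.
    assert (0 < 2*d + (A+B)) by nra.
    destruct (Rle_or_lt (2*d - (A+B)) 0); [|lra].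
    assert ((2*d - (A+B))*(2*d + (A+B)) <= 0) by nra. lra.
  - unfold cc. apply sqrt_lt_R0. nra.
Qed.

Lemma modd (A B d P R0 : R) : d^2 = A^2 - A*B + B^2 -> P = (d^2 - (A^2 - A*B + B^2))*R0 -> P = 0.
Proof. intros h e. rewrite e, h. ring. Qed.

Lemma part2_gen (a A B c2 d w J L : R) : a > 0 -> A = a^2 -> B > 0 -> A > B -> c2 = A - B ->
  d^2 = A^2 - A*B + B^2 -> d > 0 -> w = 2*d - A - B -> w > 0 ->
  J = sqrt w / c2 -> L = 2*(d+A+B)*J ->
  (A+B+d)/(a*B) = J*sqrt 2*sqrt (J*L + sqrt (9 - 2*J*L) - 3)/(J*L-4).
Proof.
  intros ha hA hB hAB hc2 hd2 hd hw wp hJ hL.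
  assert (c2p : c2 > 0) by lra.
  assert (sw : sqrt w * sqrt w = w) by (apply sqrt_sqrt; lra).
  assert (hJL : J*L = 2*(d+A+B)*w/c2^2).
  { rewrite hL. replace (J*(2*(d+A+B)*J)) with (2*(d+A+B)*(J*J)) by ring.
    rewrite hJ. replace (sqrt w/c2 * (sqrt w/c2)) with ((sqrt w*sqrt w)/c2^2) by (field; lra).
    rewrite sw. field. lra. }
  assert (i : 9*c2^2 - 4*(d+A+B)*w - w^2 = 0).
  { apply (modd A B d _ (-12) hd2). rewrite hc2, hw. ring. }
  assert (ii : 2*(d+A+B)*w + w*c2 - 3*c2^2 - 2*A*w = 0).
  { apply (modd A B d _ 4 hd2). rewrite hc2, hw. ring. }
  assert (iii : 2*(d+A+B)*w - 4*c2^2 - 2*(d*(A+B) - A^2 - B^2) = 0).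
  { apply (modd A B d _ 4 hd2). rewrite hc2, hw. ring. }
  assert (iv : (A+B+d)*(d*(A+B) - A^2 - B^2) - A*B*w = 0).
  { apply (modd A B d _ (B+A) hd2). rewrite hw. ring. }
  assert (h9 : 9 - 2*J*L = (w/c2)^2).
  { replace (2*J*L) with (2*(J*L)) by ring. rewrite hJL.
    apply Rminus_diag_uniq.
    replace (9 - 2 * (2 * (d + A + B) * w / c2 ^ 2) - (w / c2) ^ 2) with
      ((9*c2^2 - 4*(d+A+B)*w - w^2)/c2^2) by (field; lra).
    rewrite i. field. lra. }
  rewrite h9. rewrite sqrt_pow2 by (apply Rlt_le; apply Rdiv_lt_0_compat; lra).
  assert (hin : J*L + w/c2 - 3 = (sqrt 2 * sqrt w * a / c2)^2).
  { rewrite hJL. replace ((sqrt 2 * sqrt w * a / c2)^2) with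
       ((sqrt 2 * sqrt 2) * (sqrt w * sqrt w) * a^2 / c2^2) by (field; lra).
    rewrite sw. rewrite sqrt_sqrt by lra. rewrite <- hA.
    apply Rminus_diag_uniq.
    replace (2 * (d + A + B) * w / c2 ^ 2 + w / c2 - 3 - 2 * w * A / c2 ^ 2) with
      ((2*(d+A+B)*w + w*c2 - 3*c2^2 - 2*A*w)/c2^2) by (field; lra).
    rewrite ii. field. lra. }
  rewrite hin. rewrite sqrt_pow2.
  2:{ apply Rlt_le. apply Rdiv_lt_0_compat; [|lra].
      apply Rmult_lt_0_compat; [|lra]. apply Rmult_lt_0_compat; apply sqrt_lt_R0; lra. }
  assert (hden : J*L - 4 = 2*(d*(A+B) - A^2 - B^2)/c2^2).
  { rewrite hJL. apply Rminus_diag_uniq.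
    replace (2 * (d + A + B) * w / c2 ^ 2 - 4 - 2 * (d * (A + B) - A ^ 2 - B ^ 2) / c2 ^ 2)
      with ((2*(d+A+B)*w - 4*c2^2 - 2*(d*(A+B) - A^2 - B^2))/c2^2) by (field; lra).
    rewrite iii. field. lra. }
  rewrite hden.
  assert (Np : d*(A+B) - A^2 - B^2 > 0).
  { assert (0 < A*B*w) by (apply Rmult_lt_0_compat; [apply Rmult_lt_0_compat|]; lra).
    destruct (Rle_or_lt (d*(A+B) - A^2 - B^2) 0); [|lra].
    assert ((A+B+d)*(d*(A+B) - A^2 - B^2) <= 0).
    { assert (0 < A+B+d) by lra. nra. }
    lra. }
  rewrite hJ.
  replace (sqrt w / c2 * sqrt 2 * (sqrt 2 * sqrt w * a / c2)) with
     ((sqrt 2 * sqrt 2)*(sqrt w * sqrt w)*a/c2^2) by (field; lra).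
  rewrite sw, sqrt_sqrt by lra.
  apply Rminus_diag_uniq.
  replace ((A + B + d) / (a * B) - 2 * w * a / c2 ^ 2 / (2 * (d * (A + B) - A ^ 2 - B ^ 2) / c2 ^ 2))
    with (((A+B+d)*(d*(A+B) - A^2 - B^2) - (a^2)*B*w)/(a*B*(d*(A+B) - A^2 - B^2))) by (field; repeat split; lra).
  rewrite <- hA, iv. field. repeat split; lra.
Qed.

Lemma refl_core (nx ny ux uy wx wy : R) :
  ux^2+uy^2 = 1 -> wx^2+wy^2 = 1 -> nx*(uy+wy) - ny*(ux+wx) = 0 ->
  nx*ux+ny*uy < 0 -> nx*wx+ny*wy < 0 -> nx*ux+ny*uy = nx*wx+ny*wy.
Proof.
  intros hu hw hc hnu hnw.
  assert (BC : (nx*(ux-wx)+ny*(uy-wy))*((ux+wx)^2+(uy+wy)^2)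
     - (nx*(ux+wx)+ny*(uy+wy))*((ux-wx)*(ux+wx)+(uy-wy)*(uy+wy))
     = (nx*(uy+wy) - ny*(ux+wx))*((ux-wx)*(uy+wy) - (uy-wy)*(ux+wx))) by ring.
  rewrite hc in BC.
  assert (rs : (ux-wx)*(ux+wx)+(uy-wy)*(uy+wy) = 0) by (replace ((ux-wx)*(ux+wx)+(uy-wy)*(uy+wy)) with ((ux^2+uy^2) - (wx^2+wy^2)) by ring; lra).
  rewrite rs in BC.
  assert (H : (nx*(ux-wx)+ny*(uy-wy))*((ux+wx)^2+(uy+wy)^2) = 0) by lra.
  apply Rmult_integral in H. destruct H as [H|H]; [lra|].
  exfalso.
  assert (ux+wx = 0 /\ uy+wy = 0) as [h1 h2].
  { pose proof (pow2_ge_0 (ux+wx)). pose proof (pow2_ge_0 (uy+wy)).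
    split; apply (Rsqr_0_uniq); unfold Rsqr; lra. }
  assert (wx = -ux) by lra. assert (wy = -uy) by lra. subst wx wy. lra.
Qed.

Lemma ell_coord (a b : R) (P : pt) : a > 0 -> b > 0 -> on_ellipse a b P ->
  exists X Y, P = (a*X, b*Y) /\ X^2 + Y^2 = 1.
Proof.
  intros ha hb h. destruct P as [x y]. exists (x/a), (y/b). split.
  - f_equal; field; lra.
  - unfold on_ellipse in h. simpl in h. rewrite <- h. field. split; lra.
Qed.

Lemma focus_dist (a b X Y : R) : a > b -> b > 0 -> X^2+Y^2 = 1 ->
  pdist (a*X, b*Y) (focus1 a b) = a + cc a b * X.
Proof.
  intros hab hb hu. unfold pdist, focus1; cbn [fst snd].
  assert (hc2 : (cc a b)^2 = a^2 - b^2) by (unfold cc; apply pow2_sqrt; nra).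
  assert (hc : 0 <= cc a b) by apply sqrt_pos.
  assert (hca : cc a b < a).
  { destruct (Rlt_or_le (cc a b) a); [auto|]. nra. }
  assert (hX : -1 <= X <= 1) by (split; nra).
  replace ((a * X - - cc a b) ^ 2 + (b * Y - 0) ^ 2) with ((a + cc a b * X)^2).
  - apply sqrt_pow2. nra.
  - replace ((a * X - - cc a b) ^ 2 + (b * Y - 0) ^ 2) with
      (a^2*X^2 + 2*a*cc a b*X + (cc a b)^2 + b^2*Y^2) by ring.
    replace (Y^2) with (1 - X^2) by lra. rewrite hc2.
    transitivity (a^2 + 2*a*cc a b*X + (cc a b)^2*X^2); [ring|]. rewrite hc2. ring.
Qed.

Lemma dist_sq (a b X Y X1 Y1 : R) :
  pdist (a*X, b*Y) (a*X1, b*Y1) ^ 2 = (a*X - a*X1)^2 + (b*Y - b*Y1)^2.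
Proof.
  unfold pdist; cbn [fst snd]. apply pow2_sqrt.
  pose proof (pow2_ge_0 (a*X - a*X1)). pose proof (pow2_ge_0 (b*Y - b*Y1)). lra.
Qed.

Lemma dist_pos (a b X Y X1 Y1 : R) : a > 0 -> b > 0 -> (X <> X1 \/ Y <> Y1) ->
  0 < pdist (a*X, b*Y) (a*X1, b*Y1).
Proof.
  intros ha hb hd. unfold pdist; cbn [fst snd]. apply sqrt_lt_R0.
  pose proof (pow2_ge_0 (a*X - a*X1)). pose proof (pow2_ge_0 (b*Y - b*Y1)).
  destruct hd as [h|h].
  - assert (a*X - a*X1 <> 0).
    { intro e. apply h. apply (Rmult_eq_reg_l a); lra. }
    assert (0 < (a*X - a*X1)^2) by (replace ((a*X - a*X1)^2) with (Rsqr (a*X - a*X1)) by (unfold Rsqr; ring); apply Rsqr_pos_lt; auto).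
    lra.
  - assert (b*Y - b*Y1 <> 0).
    { intro e. apply h. apply (Rmult_eq_reg_l b); lra. }
    assert (0 < (b*Y - b*Y1)^2) by (replace ((b*Y - b*Y1)^2) with (Rsqr (b*Y - b*Y1)) by (unfold Rsqr; ring); apply Rsqr_pos_lt; auto).
    lra.
Qed.

Lemma g_pos (X Y X1 Y1 : R) : X^2+Y^2 = 1 -> X1^2+Y1^2 = 1 -> (X <> X1 \/ Y <> Y1) ->
  0 < 1 - X*X1 - Y*Y1.
Proof.
  intros h h1 hd.
  replace (1 - X*X1 - Y*Y1) with (((X-X1)^2 + (Y-Y1)^2)/2)
    by (replace 1 with ((X^2+Y^2 + (X1^2+Y1^2))/2) at 1 by lra; field).
  pose proof (pow2_ge_0 (X-X1)). pose proof (pow2_ge_0 (Y-Y1)).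
  destruct hd as [e|e].
  - assert (0 < (X-X1)^2) by (replace ((X-X1)^2) with (Rsqr (X-X1)) by (unfold Rsqr; ring); apply Rsqr_pos_lt; lra). lra.
  - assert (0 < (Y-Y1)^2) by (replace ((Y-Y1)^2) with (Rsqr (Y-Y1)) by (unfold Rsqr; ring); apply Rsqr_pos_lt; lra). lra.
Qed.

Lemma vertex (a b X Y X1 Y1 X2 Y2 : R) : a > 0 -> b > 0 ->
  X^2+Y^2 = 1 -> X1^2+Y1^2 = 1 -> X2^2+Y2^2 = 1 ->
  (X <> X1 \/ Y <> Y1) -> (X <> X2 \/ Y <> Y2) ->
  reflects a b (a*X1, b*Y1) (a*X, b*Y) (a*X2, b*Y2) ->
  (1 - X*X1 - Y*Y1)/pdist (a*X, b*Y) (a*X1, b*Y1) =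
  (1 - X*X2 - Y*Y2)/pdist (a*X, b*Y) (a*X2, b*Y2).
Proof.
  intros ha hb h h1 h2 n1 n2 hr.
  pose proof (dist_pos a b X Y X1 Y1 ha hb n1) as p1.
  pose proof (dist_pos a b X Y X2 Y2 ha hb n2) as p2.
  pose proof (dist_sq a b X Y X1 Y1) as s1.
  pose proof (dist_sq a b X Y X2 Y2) as s2.
  pose proof (g_pos X Y X1 Y1 h h1 n1) as g1.
  pose proof (g_pos X Y X2 Y2 h h2 n2) as g2.
  unfold reflects, cross, normal, unit_dir in hr; cbn [fst snd] in hr.
  remember (pdist (a*X, b*Y) (a*X1, b*Y1)) as d1.
  remember (pdist (a*X, b*Y) (a*X2, b*Y2)) as d2.
  assert (E1 : a*X/a^2*((a*X1 - a*X)/d1) + b*Y/b^2*((b*Y1 - b*Y)/d1) = -((1 - X*X1 - Y*Y1)/d1)).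
  { transitivity ((X*(X1-X) + Y*(Y1-Y))/d1); [field; repeat split; lra|].
    replace (X*(X1-X) + Y*(Y1-Y)) with (-(1 - X*X1 - Y*Y1)) by lra. field. lra. }
  assert (E2 : a*X/a^2*((a*X2 - a*X)/d2) + b*Y/b^2*((b*Y2 - b*Y)/d2) = -((1 - X*X2 - Y*Y2)/d2)).
  { transitivity ((X*(X2-X) + Y*(Y2-Y))/d2); [field; repeat split; lra|].
    replace (X*(X2-X) + Y*(Y2-Y)) with (-(1 - X*X2 - Y*Y2)) by lra. field. lra. }
  assert (U1 : ((a*X1 - a*X)/d1)^2 + ((b*Y1 - b*Y)/d1)^2 = 1).
  { transitivity (((a*X - a*X1)^2 + (b*Y - b*Y1)^2)/d1^2); [field; lra|].
    rewrite <- s1. field. lra. }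
  assert (U2 : ((a*X2 - a*X)/d2)^2 + ((b*Y2 - b*Y)/d2)^2 = 1).
  { transitivity (((a*X - a*X2)^2 + (b*Y - b*Y2)^2)/d2^2); [field; lra|].
    rewrite <- s2. field. lra. }
  assert (N1 : -((1 - X*X1 - Y*Y1)/d1) < 0).
  { assert (0 < (1 - X*X1 - Y*Y1)/d1) by (apply Rdiv_lt_0_compat; lra). lra. }
  assert (N2 : -((1 - X*X2 - Y*Y2)/d2) < 0).
  { assert (0 < (1 - X*X2 - Y*Y2)/d2) by (apply Rdiv_lt_0_compat; lra). lra. }
  rewrite <- E1 in N1. rewrite <- E2 in N2.
  pose proof (refl_core _ _ _ _ _ _ U1 U2 hr N1 N2) as R.
  rewrite E1, E2 in R. lra.
Qed.

Lemma pair_eq (a b X Y X1 Y1 k : R) : a > 0 -> b > 0 ->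
  X^2+Y^2 = 1 -> X1^2+Y1^2 = 1 -> (X <> X1 \/ Y <> Y1) ->
  (1 - X*X1 - Y*Y1)/pdist (a*X, b*Y) (a*X1, b*Y1) = k ->
  (k^2*(a^2-b^2) - 1)*X*X1 - (k^2*(a^2-b^2)+1)*Y*Y1 = k^2*(a^2+b^2) - 1.
Proof.
  intros ha hb h h1 n hk.
  pose proof (dist_pos a b X Y X1 Y1 ha hb n) as p.
  pose proof (dist_sq a b X Y X1 Y1) as s.
  pose proof (g_pos X Y X1 Y1 h h1 n) as g.
  remember (pdist (a*X, b*Y) (a*X1, b*Y1)) as d.
  set (gg := 1 - X*X1 - Y*Y1) in *.
  set (Q := a^2 + b^2 - (a^2-b^2)*(X*X1 - Y*Y1)).
  assert (dQ : d^2 = gg*Q).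
  { rewrite s. apply Rminus_diag_uniq.
    transitivity ((a^2 - (a^2-b^2)*X1^2)*(X^2+Y^2-1) + (b^2 + (a^2-b^2)*Y^2)*(X1^2+Y1^2-1)).
    - unfold gg, Q. ring.
    - rewrite h, h1. ring. }
  assert (gk : gg = k*d) by (rewrite <- hk; field; lra).
  assert (gg*gg = k^2*gg*Q).
  { transitivity (k^2*d^2); [rewrite gk; ring|]. rewrite dQ. ring. }
  assert (gg = k^2*Q).
  { apply (Rmult_eq_reg_l gg); [|lra]. rewrite H. ring. }
  unfold gg, Q in H0. lra.
Qed.

Lemma pdist_sym (P Q : pt) : pdist P Q = pdist Q P.
Proof. unfold pdist. f_equal. ring. Qed.

Lemma neq_coord (a b X1 Y1 X2 Y2 : R) : (a*X1, b*Y1) <> (a*X2, b*Y2) -> X1 <> X2 \/ Y1 <> Y2.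
Proof.
  intro h. destruct (Req_dec X1 X2); [|left; auto].
  destruct (Req_dec Y1 Y2); [|right; auto]. subst. exfalso; apply h; reflexivity.
Qed.

Lemma r_pos (a b X Y : R) : a > b -> b > 0 -> X^2+Y^2 = 1 -> 0 < a + cc a b * X.
Proof.
  intros hab hb hu.
  assert (hc2 : (cc a b)^2 = a^2 - b^2) by (unfold cc; apply pow2_sqrt; nra).
  assert (hc : 0 <= cc a b) by apply sqrt_pos.
  assert (hca : cc a b < a).
  { destruct (Rlt_or_le (cc a b) a); [auto|]. nra. }
  assert (hX : -1 <= X <= 1) by (split; nra).
  nra.
Qed.

Theorem mainTheorem11 (a b : R) (P1 P2 P3 : pt) :
  a > b -> b > 0 ->
  three_periodic a b P1 P2 P3 ->
  let S := / pdist P1 (focus1 a b) + / pdist P2 (focus1 a b)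
           + / pdist P3 (focus1 a b) in
  let J := Jc a b in
  let L := Lp a b in
  S = (a ^ 2 + b ^ 2 + delta a b) / (a * b ^ 2) /\
  (a ^ 2 + b ^ 2 + delta a b) / (a * b ^ 2)
  = J * sqrt 2 * sqrt (J * L + sqrt (9 - 2 * J * L) - 3) / (J * L - 4).
Proof.
  intros hab hb [n12 [n23 [n31 [o1 [o2 [o3 [r1 [r2 r3]]]]]]]] S J L.
  assert (ha : a > 0) by lra.
  destruct (basics a b hab hb) as [hc2 [hd2 [hd [hw hc]]]].
  split.
  2:{ unfold J, L, Lp, Jc. clear S J L.
      apply (part2_gen a (a^2) (b^2) ((cc a b)^2) (delta a b) (2 * delta a b - a ^ 2 - b ^ 2)); 
        auto; try reflexivity.
      - apply pow_lt; lra.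
      - nra. }
  unfold S. clear S J L.
  destruct (ell_coord a b P1 ha hb o1) as [X1 [Y1 [-> u1]]].
  destruct (ell_coord a b P2 ha hb o2) as [X2 [Y2 [-> u2]]].
  destruct (ell_coord a b P3 ha hb o3) as [X3 [Y3 [-> u3]]].
  rewrite !focus_dist by auto.
  apply neq_coord in n12. apply neq_coord in n23. apply neq_coord in n31.
  assert (n13 : X1 <> X3 \/ Y1 <> Y3) by (destruct n31; [left|right]; congruence).
  assert (n21 : X2 <> X1 \/ Y2 <> Y1) by (destruct n12; [left|right]; congruence).
  pose proof (vertex a b X1 Y1 X3 Y3 X2 Y2 ha hb u1 u3 u2 n13 n12 r1) as v1.
  pose proof (vertex a b X2 Y2 X1 Y1 X3 Y3 ha hb u2 u1 u3 n21 n23 r2) as v2.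
  set (k := (1 - X1*X2 - Y1*Y2)/pdist (a*X1, b*Y1) (a*X2, b*Y2)) in *.
  assert (kp : 0 < k).
  { unfold k. apply Rdiv_lt_0_compat; [apply g_pos; auto| apply dist_pos; auto]. }
  assert (k21 : (1 - X2*X1 - Y2*Y1)/pdist (a*X2, b*Y2) (a*X1, b*Y1) = k).
  { unfold k. rewrite pdist_sym. f_equal. ring. }
  rewrite k21 in v2.
  pose proof (pair_eq a b X1 Y1 X2 Y2 k ha hb u1 u2 n12 eq_refl) as e12.
  pose proof (pair_eq a b X1 Y1 X3 Y3 k ha hb u1 u3 n13 v1) as e13.
  pose proof (pair_eq a b X2 Y2 X3 Y3 k ha hb u2 u3 n23 (eq_sym v2)) as e23.
  assert (sp : k^2 > 0) by (apply pow_lt; lra).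
  assert (AB : a^2 > b^2) by (clear - hab hb; nra).
  assert (hB : b^2 > 0) by (apply pow_lt; lra).
  assert (e31 : (k^2*(a^2-b^2) - 1)*X3*X1 - (k^2*(a^2-b^2)+1)*Y3*Y1 = k^2*(a^2+b^2) - 1)
    by (rewrite <- e13; ring).
  destruct (core (a^2) (b^2) (k^2) X1 Y1 X2 Y2 X3 Y3 hB AB sp u1 u2 u3 n12 n23 n31 e12 e23 e31)
    as [f1 [e2 e3]].
  assert (hsw : k^2*(a^2-b^2)^2 = 2*delta a b - a^2 - b^2).
  { set (x := k^2*(a^2-b^2)^2 + a^2 + b^2).
    assert (xp : x > 0) by (unfold x; assert (0 <= k^2*(a^2-b^2)^2) by (apply Rmult_le_pos; [lra|apply pow2_ge_0]); lra).
    assert (x^2 = (2*delta a b)^2).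
    { replace ((2*delta a b)^2) with (4*(delta a b)^2) by ring. rewrite hd2. unfold x.
      apply Rminus_diag_uniq.
      transitivity ((a^2-b^2)^2*(k^2*k^2*(a^2-b^2)^2 + 2*k^2*(a^2+b^2) - 3)); [ring|].
      replace (k^2*k^2*(a^2-b^2)^2) with ((k^2)^2*(a^2-b^2)^2) by ring. rewrite f1. ring. }
    assert ((x - 2*delta a b)*(x + 2*delta a b) = 0) by (replace ((x - 2*delta a b)*(x + 2*delta a b)) with (x^2 - (2*delta a b)^2) by ring; lra).
    apply Rmult_integral in H0. destruct H0; [unfold x in *; lra|lra]. }
  pose proof (key a (cc a b) (a^2) (b^2) (a^2-b^2) (delta a b) (k^2) (X1+X2+X3)
     (X1*X2+X1*X3+X2*X3) (X1*X2*X3) ha hB eq_refl (eq_sym hc2) eq_refl AB hd2 sp hsw e2 e3) as K.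
  pose proof (r_pos a b X1 Y1 hab hb u1). pose proof (r_pos a b X2 Y2 hab hb u2).
  pose proof (r_pos a b X3 Y3 hab hb u3).
  set (c := cc a b) in *.
  apply Rminus_diag_uniq.
  transitivity ((a*b^2*((a+c*X2)*(a+c*X3) + (a+c*X1)*(a+c*X3) + (a+c*X1)*(a+c*X2))
      - (a^2+b^2+delta a b)*((a+c*X1)*(a+c*X2)*(a+c*X3)))
      /((a+c*X1)*(a+c*X2)*(a+c*X3)*(a*b^2))).
  - field. repeat split; lra.
  - replace (a*b^2*((a+c*X2)*(a+c*X3) + (a+c*X1)*(a+c*X3) + (a+c*X1)*(a+c*X2))
      - (a^2+b^2+delta a b)*((a+c*X1)*(a+c*X2)*(a+c*X3))) with 0.
    + unfold Rdiv. ring.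
    + transitivity (a*b^2*(3*a^2 + 2*a*c*(X1+X2+X3) + c^2*(X1*X2+X1*X3+X2*X3))
         - (a^2+b^2+delta a b)*(a^3 + a^2*c*(X1+X2+X3) + a*c^2*(X1*X2+X1*X3+X2*X3) + c^3*(X1*X2*X3))).
      * rewrite K. ring.
      * ring.
Qed.
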